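(* Let $X$ and $Y$ be connected finite undirected graphs, each with $n$ vertices, and let $p>n$ be a prime. Let $Z$ be the disjoint union of $p$ connected components $Z_1,\ldots,Z_p$, where $Z_i$ is an isomorphic copy of $X$ for each $1\le i<p$ and $Z_p$ is an isomorphic copy of $Y$. If the cyclic group $\mathbb{Z}/p\mathbb{Z}$ is representable on $Z$, then $X$ and $Y$ are isomorphic.
   Context: For a graph $W$, $\mathrm{Aut}(W)$ denotes its automorphism group (permutations of the vertex set mapping edges to edges and non-edges to non-edges). A finite group $G$ is said to be representable on a graph $W$ if there exists a nontrivial homomorphism from $G$ to $\mathrm{Aut}(W)$ (i.e. one not mapping every element to the identity). *)

(* Defs.v *)
From mathcomp Require Import all_boot all_order all_algebra all_fingroup.
Set Implicit Arguments. Unset Strict Implicit. Unset Printing Implicit Defensive.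

Definition simple_graph (V : finType) (e : rel V) : Prop :=
  symmetric e /\ irreflexive e.

Definition graph_connected (V : finType) (e : rel V) : Prop :=
  forall x y : V, connect e x y.

Definition graph_iso (V1 V2 : finType) (e1 : rel V1) (e2 : rel V2) : Prop :=
  exists f : V1 -> V2, bijective f /\ forall x y, e2 (f x) (f y) = e1 x y.

Definition is_aut (W : finType) (e : rel W) (s : {perm W}) : Prop :=
  forall x y, e (s x) (s y) = e x y.

Definition Zp_representable (p : nat) (W : finType) (e : rel W) : Prop :=
  exists f : 'Z_p -> {perm W},
    (forall a b : 'Z_p, f (a + b)%R = (f a * f b)%g) /\
    (forall a, is_aut e (f a)) /\
    (exists a, f a != 1%g).

Definition union_vertex (p : nat) (VX VY : finType) : finType :=
  (('I_p.-1 * VX) + VY)%type.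

Definition union_rel (p : nat) (VX VY : finType) (eX : rel VX) (eY : rel VY)
  : rel (union_vertex p VX VY) :=
  fun u v => match u, v with
             | inl (i, x), inl (j, y) => (i == j) && eX x y
             | inr x, inr y => eY x y
             | _, _ => false
             end.
Arguments union_rel p {VX VY} eX eY.
Arguments Zp_representable p {W} e.

(* Main.v *)
Require Import Defs.
From mathcomp Require Import all_boot all_order all_algebra all_fingroup.

Section Helpers.
Import GRing.Theory.
Local Open Scope ring_scope.

Lemma conn_fwd (T : finType) (e : rel T) (a : pred T) :
  (forall x y, e x y -> a x -> a y) -> forall x y, connect e x y -> a x -> a y.
Proof.
move=> cl x _ /connectP[q e_q ->].
by elim: q x e_q => //= y q IHq x /andP[exy /IHq H] ax; apply: H; apply: cl ax.
Qed.

Lemma aut_connect (W : finType) (e : rel W) (h : {perm W}) :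
  is_aut e h -> forall x y, connect e x y -> connect e (h x) (h y).
Proof.
move=> ah x y cxy.
apply: (@conn_fwd W e (fun z => connect e (h x) (h z))) cxy _ => //.
move=> u v euv cu; apply: connect_trans cu (connect1 _); by rewrite ah.
Qed.

Lemma Zp_unit_nz (p : nat) (d : 'Z_p) : prime p -> d != 0 -> d \is a GRing.unit.
Proof.
move=> pp dn0; have p1 := prime_gt1 pp.
rewrite -(natr_Zp d) unitZpE // prime_coprime //.
apply/negP => /(dvdn_leq _) H.
have dpos : (0 < nat_of_ord d)%N by rewrite lt0n; apply: contra dn0 => /eqP d0; apply/eqP/val_inj.
have := H dpos; have := ltn_ord d.
move: (nat_of_ord d) => k; rewrite Zp_cast //.
move=> a b; by move: (leq_trans a b); rewrite ltnn.
Qed.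

End Helpers.

Theorem mainTheorem2 (n p : nat) (VX VY : finType) (eX : rel VX) (eY : rel VY) :
  simple_graph eX -> simple_graph eY ->
  graph_connected eX -> graph_connected eY ->
  #|VX| = n -> #|VY| = n ->
  prime p -> n < p ->
  Zp_representable p (union_rel p eX eY) ->
  graph_iso eX eY.
Proof.
move=> [_ irrX] [_ irrY] cX cY cardX cardY pp ltnp [f [fM [faut [a0 na0]]]].
have p1 := prime_gt1 pp.
have fapp : forall (a b : 'Z_p) x, f (a + b)%R x = f b (f a x).
  by move=> a b x; rewrite fM permM.
have f0 : forall x, f 0%R x = x.
  by move=> x; apply: (@perm_inj _ (f 0%R)); rewrite -fapp GRing.addr0.
have iso_of : forall (h : {perm union_vertex p VX VY}) j x0 y0,
    is_aut (union_rel p eX eY) h -> h (inl (j, x0)) = inr y0 -> graph_iso eX eY.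
  move=> h j x0 y0 ah hx0.
  have allr : forall x, exists y, h (inl (j, x)) = inr y.
    move=> x.
    have : (fun z => if h (inl (j, z)) is inr _ then true else false) x.
      apply: (@conn_fwd VX eX (fun z => if h (inl (j, z)) is inr _ then true else false) _ x0 x (cX x0 x)); last by rewrite /= hx0.
      move=> u v euv /=.
      have : union_rel p eX eY (h (inl (j,u))) (h (inl (j,v))) by rewrite ah /= eqxx euv.
      by case: (h (inl (j,u))) => // yu; case: (h (inl (j,v))).
    by case: (h (inl (j, x))) => // y _; exists y.
  pose F x := if h (inl (j, x)) is inr y then y else y0.
  have hF : forall x, h (inl (j, x)) = inr (F x).
    by move=> x; rewrite /F; case: (allr x) => y ->.
  exists F; split.
    apply: inj_card_bij; last by rewrite cardX cardY.
    move=> x y eF; have : h (inl (j, x)) = h (inl (j, y)) by rewrite !hF eF.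
    by move/perm_inj; case.
  move=> x y; rewrite -[eY _ _]/(union_rel p eX eY (inr (F x)) (inr (F y))) -!hF ah /= eqxx.
  done.
have fixall : forall u (a b : 'Z_p), a != b -> f a u = f b u -> forall c, f c u = u.
  move=> u a b nab eab c.
  pose d := (b - a)%R.
  have dn0 : d != 0%R by rewrite /d GRing.subr_eq0 eq_sym.
  pose w := f a u.
  have fdw : f d w = w.
    rewrite /w -fapp; have -> : (a + d = b)%R by rewrite /d GRing.addrC GRing.subrK.
    by rewrite eab.
  have fkw : forall k, f (d *+ k)%R w = w.
    elim=> [|k IH]; first by rewrite GRing.mulr0n f0.
    by rewrite GRing.mulrS fapp fdw.
  have fcw : forall c', f c' w = w.
    move=> c'; have du := @Zp_unit_nz p d pp dn0.
    have -> : c' = (d *+ (nat_of_ord (d^-1 * c')%R))%R.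
      by rewrite -GRing.mulr_natr natr_Zp GRing.mulrA GRing.divrr // GRing.mul1r.
    exact: fkw.
  have uw : u = f (- a)%R w by rewrite /w -fapp GRing.subrr f0.
  by rewrite uw -fapp fcw.
have [u injU] : exists u, injective (fun a : 'Z_p => f a u).
  case: (pickP (fun u => ~~ [exists a : 'Z_p, exists b : 'Z_p, (a != b) && (f a u == f b u)])) => [u Hu | allf].
    exists u => a b /= eab; apply/eqP; apply/negPn/negP => nab.
    move/negP: Hu; apply; apply/existsP; exists a; apply/existsP; exists b; by rewrite nab eab eqxx.
  case/eqP: na0; apply/permP => x; rewrite perm1.
  move: (allf x) => /= /negbFE /existsP [a /existsP [b /andP [nab /eqP eab]]].
  exact: fixall nab eab a0.
pose c (w : union_vertex p VX VY) : option 'I_p.-1 := if w is inl (i, _) then Some i else None.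
have cE : forall w w', connect (union_rel p eX eY) w w' -> c w = c w'.
  move=> w w' cw; apply/eqP; apply: (@conn_fwd _ _ (fun z => c w == c z) _ w w' cw) => //.
  move=> [[i x]|y] [[i' x']|y'] //= .
  by case/andP=> /eqP <-.
have connSame : forall w w', c w = c w' -> connect (union_rel p eX eY) w w'.
  move=> [[i x]|y] [[i' x']|y'] //= .
    move=> [<-]; apply: (@conn_fwd VX eX (fun z => connect (union_rel p eX eY) (inl (i, x)) (inl (i, z))) _ x x' (cX x x')); last exact: connect0.
    move=> u' v euv cu; apply: connect_trans cu (connect1 _); by rewrite /= eqxx euv.
  move=> _; apply: (@conn_fwd VY eY (fun z => connect (union_rel p eX eY) (inr y) (inr z)) _ y y' (cY y y')); last exact: connect0.
  move=> u' v euv cu; apply: connect_trans cu (connect1 _); by rewrite /=.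
have cardZ : #|'Z_p| = p by rewrite card_ord Zp_cast.
have injc : injective (fun a : 'Z_p => c (f a u)).
  move=> a b /= eq_c; apply/eqP; apply/negPn/negP => nab.
  have cab := connSame _ _ eq_c.
  have := @aut_connect _ _ _ (faut (- a)%R) _ _ cab.
  rewrite -!fapp GRing.subrr f0 => cud.
  have dn0 : (b - a)%R != 0%R by rewrite GRing.subr_eq0 eq_sym.
  move: (b - a)%R dn0 cud => d dn0 cud.
  have du := @Zp_unit_nz p d pp dn0.
  have ck : forall k, connect (union_rel p eX eY) u (f (d *+ k)%R u).
    elim=> [|k IH]; first by rewrite GRing.mulr0n f0 connect0.
    rewrite GRing.mulrS fapp; exact: connect_trans IH (@aut_connect _ _ _ (faut _) _ _ cud).
  pose S := [set f (d * m)%R u | m : 'Z_p].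
  have cS : #|S| = p.
    rewrite card_imset; first by rewrite cardZ.
    by move=> m m' /= /injU /(GRing.mulrI du).
  have Ssub : S \subset [set w | c w == c u].
    apply/subsetP => w /imsetP [m _ ->]; rewrite inE; apply/eqP; symmetry; apply: cE.
    by rewrite -(natr_Zp m) GRing.mulr_natr; exact: ck.
  have : #|[set w | c w == c u]| <= n.
    case cu: (c u) => [i|].
      apply: leq_trans (_ : #|[set (inl (i, x) : union_vertex p VX VY) | x : VX]| <= n).
        apply: subset_leq_card; apply/subsetP => w; rewrite inE.
        case: w => [[i' x]|y] //= /eqP [->]; apply/imsetP; exists x => //.
      by rewrite -cardX leq_imset_card.
    apply: leq_trans (_ : #|[set (inr y : union_vertex p VX VY) | y : VY]| <= n).
      apply: subset_leq_card; apply/subsetP => w; rewrite inE.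
      case: w => [[i' x]|y] //= _; apply/imsetP; exists y => //.
    by rewrite -cardY leq_imset_card.
  move/(leq_trans (subset_leq_card Ssub)); rewrite cS => pn.
  by move: (leq_ltn_trans pn ltnp); rewrite ltnn.
have cardO : #|{: option 'I_p.-1}| = p by rewrite card_option card_ord prednK // ltnW.
have onto : forall y, y \in codom (fun a : 'Z_p => c (f a u)).
  by move=> y; apply: inj_card_onto injc _ y; rewrite cardZ cardO.
have p1' : (0 < p.-1)%N by rewrite -ltnS prednK // ltnW.
case/codomP: (onto None) => a ea.
case/codomP: (onto (Some (Ordinal p1'))) => b eb.
move: ea eb; rewrite /c; case ha: (f a u) => [[ia xa]|ya] //= _; case hb: (f b u) => [[j xb]|yb] //= _.
apply: (iso_of (f (- b + a)%R) j xb ya (faut _)).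
by rewrite -hb -fapp GRing.addrA GRing.subrr GRing.add0r ha.
Qed.
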